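(* For any positive integer $n$, there exists a $(3;\ 6^n,\ 3^n,\ 3)$ perfect hash family.
   Context: Let $r,m,q',t$ be integers with $m\ge q'\ge t\ge2$. An $(r;m,q',t)$ perfect hash family (PHF) is a set $\mathcal{X}$ of $r$ functions from a set $\mathcal{B}$ with $|\mathcal{B}|=m$ to a set $\mathcal{C}$ with $|\mathcal{C}|=q'$ such that for every $\mathcal{T}\subseteq\mathcal{B}$ with $|\mathcal{T}|=t$ there is at least one $\varphi\in\mathcal{X}$ whose restriction to $\mathcal{T}$ is injective. Equivalently, an $r\times m$ array over $q'$ symbols in which every $r\times t$ subarray has at least one row with $t$ distinct symbols. *)

(* Defs.v *)
From mathcomp Require Import all_boot.
Set Implicit Arguments. Unset Strict Implicit. Unset Printing Implicit Defensive.

(* An (r; m, q', t) perfect hash family: a family X of r functions from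
   B = 'I_m (|B| = m) to C = 'I_q' (|C| = q'), with m >= q' >= t >= 2, such that
   every t-subset T of B has some X i injective on T.
   (Equivalently an r x m array over q' symbols; repeated rows are allowed.) *)
Definition is_PHF (r m q' t : nat) (X : 'I_r -> 'I_m -> 'I_q') : Prop :=
  [/\ q' <= m, t <= q', 2 <= t &
      forall T : {set 'I_m}, #|T| = t ->
        exists i : 'I_r, {in T &, injective (X i)}].

Definition PHF_exists (r m q' t : nat) : Prop :=
  exists X : 'I_r -> 'I_m -> 'I_q', @is_PHF r m q' t X.

(* Main.v *)
Require Import Defs.
From mathcomp Require Import all_boot.

Definition sep3 {B : eqType} (a b c : B) := [&& a != b, a != c & b != c].

Definition good {A B : finType} (X : 'I_3 -> A -> B) :=
 (forall a b c : A, sep3 a b c -> exists i, sep3 (X i a) (X i b) (X i c)) /\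
 (forall a b : A, a != b -> forall i j : 'I_3, i != j -> X i a = X i b -> X j a != X j b).

Definition tbl := [:: [:: 0;0;1;1;2;2]; [:: 0;1;0;2;1;2]; [:: 0;1;2;1;2;0]].
Definition g6 (i : 'I_3) (x : 'I_6) : 'I_3 := Ordinal (@ltn_pmod (nth 0 (nth [::] tbl i) x) 3 isT).

Definition L6 : seq 'I_6 := [:: Ordinal (isT : 0 < 6); Ordinal (isT : 1 < 6); Ordinal (isT : 2 < 6);
  Ordinal (isT : 3 < 6); Ordinal (isT : 4 < 6); Ordinal (isT : 5 < 6)].
Definition L3 : seq 'I_3 := [:: Ordinal (isT : 0 < 3); Ordinal (isT : 1 < 3); Ordinal (isT : 2 < 3)].

Lemma memL6 (a : 'I_6) : a \in L6.
Proof. by case: a => [[|[|[|[|[|[|a]]]]]] ha]. Qed.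
Lemma memL3 (a : 'I_3) : a \in L3.
Proof. by case: a => [[|[|[|a]]] ha]. Qed.

Lemma good_g6 : good g6.
Proof.
have H1 : all (fun a => all (fun b => all (fun c => sep3 a b c ==>
   has (fun i => sep3 (g6 i a) (g6 i b) (g6 i c)) L3) L6) L6) L6 by vm_compute.
have H2 : all (fun a => all (fun b => (a != b) ==> all (fun i => all (fun j =>
   (i != j) ==> (g6 i a == g6 i b) ==> (g6 j a != g6 j b)) L3) L3) L6) L6 by vm_compute.
split.
  move=> a b c h; move/allP: H1 => /(_ a (memL6 a)) /allP /(_ b (memL6 b)) /allP /(_ c (memL6 c)).
  by rewrite h => /hasP [i _ hi]; exists i.
move=> a b hab i j hij e; move/allP: H2 => /(_ a (memL6 a)) /allP /(_ b (memL6 b)).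
by rewrite hab => /allP /(_ i (memL3 i)) /allP /(_ j (memL3 j)); rewrite hij e eqxx.
Qed.

Definition o0 : 'I_3 := Ordinal (isT : 0 < 3).
Definition o1 : 'I_3 := Ordinal (isT : 1 < 3).
Definition o2 : 'I_3 := Ordinal (isT : 2 < 3).

Lemma common_row (c1 c2 : 'I_3 -> bool) :
  (forall i j, i != j -> c1 i -> ~~ c1 j) ->
  (forall i j, i != j -> c2 i -> ~~ c2 j) ->
  exists i, ~~ c1 i && ~~ c2 i.
Proof.
move=> h1 h2.
have a1 := h1 o0 o1 isT; have a2 := h1 o0 o2 isT; have a3 := h1 o1 o2 isT.
have b1 := h2 o0 o1 isT; have b2 := h2 o0 o2 isT; have b3 := h2 o1 o2 isT.
case E1: (c1 o0) a1 a2; case E2: (c1 o1) a3; case E3: (c1 o2);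
case F1: (c2 o0) b1 b2; case F2: (c2 o1) b3; case F3: (c2 o2) => //= *;
  solve [by exists o0; rewrite E1 F1 | by exists o1; rewrite E2 F2 | by exists o2; rewrite E3 F3
        | by exfalso; intuition].
Qed.
Section Prod.
Variables (A1 A2 B1 B2 : finType) (X : 'I_3 -> A1 -> B1) (Y : 'I_3 -> A2 -> B2).
Hypotheses (gX : good X) (gY : good Y).
Definition hXY i (p : A1 * A2) : B1 * B2 := (X i p.1, Y i p.2).

Lemma core x1 u1 u2 x3 :
  u1 != u2 -> x1 != x3 ->
  exists i, sep3 (hXY i (x1, u1)) (hXY i (x1, u2)) (hXY i (x3, u1)).
Proof.
move=> nu nx.
have [i /andP [h1 h2]] := common_row (fun i => Y i u1 == Y i u2)
   (fun i => X i x1 == X i x3)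
   (fun i j hij e => gY.2 _ _ nu i j hij (eqP e))
   (fun i j hij e => gX.2 _ _ nx i j hij (eqP e)).
exists i; rewrite /sep3 /hXY /= !xpair_eqE.
by rewrite (negbTE h1) (negbTE h2) /= andbF.
Qed.

Lemma sep3_perm (B : eqType) (a b c : B) :
  sep3 a b c -> [/\ sep3 b a c, sep3 a c b, sep3 c b a, sep3 b c a & sep3 c a b].
Proof.
rewrite /sep3 => /and3P [h1 h2 h3].
by rewrite !(eq_sym b a) !(eq_sym c a) !(eq_sym c b) h1 h2 h3.
Qed.

Lemma core1 x1 u1 u2 x3 : u1 != u2 -> x1 != x3 ->
  exists i, sep3 (hXY i (x1, u2)) (hXY i (x1, u1)) (hXY i (x3, u1)).
Proof. by move=> h1 h2; have [i /sep3_perm [? ? ? ? ?]] := core _ _ _ _ h1 h2; exists i. Qed.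
Lemma core2 x1 u1 u2 x3 : u1 != u2 -> x1 != x3 ->
  exists i, sep3 (hXY i (x1, u1)) (hXY i (x3, u1)) (hXY i (x1, u2)).
Proof. by move=> h1 h2; have [i /sep3_perm [? ? ? ? ?]] := core _ _ _ _ h1 h2; exists i. Qed.
Lemma core3 x1 u1 u2 x3 : u1 != u2 -> x1 != x3 ->
  exists i, sep3 (hXY i (x3, u1)) (hXY i (x1, u2)) (hXY i (x1, u1)).
Proof. by move=> h1 h2; have [i /sep3_perm [? ? ? ? ?]] := core _ _ _ _ h1 h2; exists i. Qed.
Lemma core4 x1 u1 u2 x3 : u1 != u2 -> x1 != x3 ->
  exists i, sep3 (hXY i (x1, u2)) (hXY i (x3, u1)) (hXY i (x1, u1)).
Proof. by move=> h1 h2; have [i /sep3_perm [? ? ? ? ?]] := core _ _ _ _ h1 h2; exists i. Qed.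
Lemma core5 x1 u1 u2 x3 : u1 != u2 -> x1 != x3 ->
  exists i, sep3 (hXY i (x3, u1)) (hXY i (x1, u1)) (hXY i (x1, u2)).
Proof. by move=> h1 h2; have [i /sep3_perm [? ? ? ? ?]] := core _ _ _ _ h1 h2; exists i. Qed.

Lemma good_prod : good hXY.
Proof.
split; last first.
  move=> [x u] [x' u'] hne i j hij; rewrite /hXY /= => [[e1 e2]].
  rewrite xpair_eqE negb_and.
  move: hne; rewrite xpair_eqE negb_and => /orP [hx|hu].
    by rewrite (gX.2 _ _ hx i j hij e1).
  by rewrite (gY.2 _ _ hu i j hij e2) orbT.
move=> [x1 u1] [x2 u2] [x3 u3] hs.
have hs' := hs; move: hs'; rewrite /sep3 !xpair_eqE !negb_and => /and3P [d12 d13 d23].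
case ex: [|| x1 == x2, x1 == x3 | x2 == x3]; last first.
  move/negbT: ex; rewrite !negb_or => /and3P [n1 n2 n3].
  have [i hi] := gX.1 x1 x2 x3 (introT and3P (And3 n1 n2 n3)).
  exists i; move: hi; rewrite /sep3 /hXY /= !xpair_eqE => /and3P [m1 m2 m3].
  by rewrite (negbTE m1) (negbTE m2) (negbTE m3).
case eu: [|| u1 == u2, u1 == u3 | u2 == u3]; last first.
  move/negbT: eu; rewrite !negb_or => /and3P [n1 n2 n3].
  have [i hi] := gY.1 u1 u2 u3 (introT and3P (And3 n1 n2 n3)).
  exists i; move: hi; rewrite /sep3 /hXY /= !xpair_eqE => /and3P [m1 m2 m3].
  by rewrite (negbTE m1) (negbTE m2) (negbTE m3) !andbF.
case/or3P: ex => /eqP ex; case/or3P: eu => /eqP eu; subst.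
all: try (by rewrite !eqxx in d12 d13 d23).
all: first [ apply: core | apply: core1 | apply: core2 | apply: core3 | apply: core4 | apply: core5 ];
  move: d12 d13 d23; rewrite ?eqxx /= ?orbF; intros; solve [assumption | rewrite eq_sym; assumption].
Qed.
End Prod.

Lemma good_inj (A A' B B' : finType) (X : 'I_3 -> A -> B) (f : A' -> A) (g : B -> B') :
  injective f -> injective g -> good X -> good (fun i a => g (X i (f a))).
Proof.
move=> fi gi [g1 g2]; split.
  move=> a b c; rewrite /sep3 -!(inj_eq fi) => h.
  by have [i hi] := g1 _ _ _ h; exists i; rewrite !(inj_eq gi).
move=> a b hab i j hij e.
rewrite (inj_eq gi); apply: g2 hij (gi _ _ e).
by rewrite (inj_eq fi).
Qed.

Lemma exists_good n : exists X : 'I_3 -> 'I_(6^n) -> 'I_(3^n), good X.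
Proof.
elim: n => [|n [X gX]].
  have z0 : 0 < 3 ^ 0 by [].
  exists (fun _ _ => Ordinal z0).
  have all_eq : forall a b : 'I_(6^0), a = b.
    move=> a b; apply: val_inj.
    have ha : val a < 1 by rewrite -(expn0 6); exact: ltn_ord.
    have hb : val b < 1 by rewrite -(expn0 6); exact: ltn_ord.
    by move: ha hb; case: (val a); case: (val b).
  by split=> [a b c | a b]; rewrite /sep3 (all_eq b a) eqxx.
have e1 : 6 ^ n.+1 = #|{: 'I_(6^n) * 'I_6}| by rewrite card_prod !card_ord expnSr.
have e2 : #|{: 'I_(3^n) * 'I_3}| = 3 ^ n.+1 by rewrite card_prod !card_ord expnSr.
pose f := fun i : 'I_(6 ^ n.+1) => (enum_val (cast_ord e1 i) : 'I_(6^n) * 'I_6).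
pose g := fun t : 'I_(3^n) * 'I_3 => cast_ord e2 (enum_rank t).
have fi : injective f by move=> x y /enum_val_inj /cast_ord_inj.
have gi : injective g by move=> x y /cast_ord_inj /enum_rank_inj.
exists (fun i a => g (@hXY _ _ _ _ X g6 i (f a))).
exact: good_inj fi gi (@good_prod _ _ _ _ X g6 gX good_g6).
Qed.

Theorem lemma8 (n : nat) (hn : 0 < n) : PHF_exists 3 (6 ^ n) (3 ^ n) 3.
Proof.
have [X [g1 _]] := exists_good n.
exists X; split => //.
- by rewrite leq_exp2r.
- by rewrite -{1}(expn1 3) leq_pexp2l.
move=> T hT.
have /card_gt0P [a aT] : 0 < #|T| by rewrite hT.
have : #|T :\ a| = 2 by move: hT; rewrite (cardsD1 a) aT => -[].
move/eqP/cards2P => [b [c [bc Tbc]]].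
have memT : forall x, x \in T -> [|| x == a, x == b | x == c].
  move=> x xT; case: (eqVneq x a) => //= xa.
  have : x \in T :\ a by rewrite in_setD1 xa xT.
  by rewrite Tbc !inE.
have : b \in T :\ a by rewrite Tbc !inE eqxx.
have : c \in T :\ a by rewrite Tbc !inE eqxx orbT.
rewrite !in_setD1 => /andP [ca _] /andP [ba _].
have ab : a != b by rewrite eq_sym.
have ac : a != c by rewrite eq_sym.
have [i /and3P [h1 h2 h3]] := g1 a b c (introT and3P (And3 ab ac bc)).
exists i => x y /memT hx /memT hy e.
case/or3P: hx e => /eqP -> e; case/or3P: hy e => /eqP -> e //;
  by move: h1 h2 h3; rewrite e eqxx ?andbF.
Qed.
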